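(* Let $r_{n,m}$ be the number of horizontally decorated paths ending at $(n,m)$. Then \[ r_{n,m}=r_{n,m-1}+(m+1)\,r_{n-1,m}\quad (n,m\ge1,\ n\ge m),\qquad r_{n,m}=0\quad(n<m),\qquad r_{n,0}=1\quad(n\ge0). \] Moreover, the number of relaxed binary trees of size $n$ equals $r_{n,n}$.
   Context: A horizontally decorated path is a lattice path starting at $(0,0)$ with steps $H=(1,0)$ and $V=(0,1)$ confined to the region $0\le y\le x$, in which each $H$ step is decorated by a number in $\{1,\dots,k+1\}$, where $k$ is the $y$-coordinate of that step. A (rooted, plane) binary tree is either a leaf or an internal node with an ordered pair of binary subtrees; its size is its number of internal nodes; postorder visits left subtree, right subtree, then root. A relaxed binary tree of size $n$ is obtained from a binary tree $T$ with $n$ internal nodes (its spine) by keeping the left-most leaf and turning every other leaf $\ell$ into a pointer to a vertex of $T$ which is an internal node or the left-most leaf and which precedes $\ell$ in postorder; two relaxed trees are equal iff they have the same spine and the same pointer targets. *)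

(* Defs.v *)
From mathcomp Require Import all_boot.
From Stdlib Require List.

Set Implicit Arguments.
Unset Strict Implicit.
Unset Printing Implicit Defensive.

Definition is_count (T : Type) (P : T -> Prop) (k : nat) : Prop :=
  exists s : list T, List.NoDup s /\ (forall x, List.In x s <-> P x) /\
                     List.length s = k.

(** A path is a sequence of steps: [None] is a V step (0,1), [Some d] is an
    H step (1,0) decorated by the number [d]. *)
Definition step := option nat.

Definition xcoord (s : seq step) (i : nat) : nat :=
  count (fun st : step => if st is Some _ then true else false) (take i s).
Definition ycoord (s : seq step) (i : nat) : nat :=
  count (fun st : step => if st is None then true else false) (take i s).

Definition hd_path (n m : nat) (s : seq step) : Prop :=
  (* confined to the region 0 <= y <= x (y >= 0 automatic) *)
  (forall i, i <= size s -> ycoord s i <= xcoord s i) /\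
  (forall i d, i < size s -> nth None s i = Some d ->
               1 <= d /\ d <= (ycoord s i).+1) /\
  xcoord s (size s) = n /\ ycoord s (size s) = m.

Inductive bt : Type :=
| Leaf : bt
| Node : bt -> bt -> bt.

Fixpoint bt_size (t : bt) : nat :=
  match t with Leaf => 0 | Node l r => (bt_size l + bt_size r).+1 end.

(** The vertices of a tree in postorder (left subtree, right subtree, root);
    [true] marks an internal node, [false] a leaf.  A vertex is identified
    with its position in this list. *)
Fixpoint postorder (t : bt) : seq bool :=
  match t with
  | Leaf => [:: false]
  | Node l r => postorder l ++ postorder r ++ [:: true]
  end.

Fixpoint leftmost_pos (t : bt) : nat :=
  match t with Leaf => 0 | Node l _ => leftmost_pos l end.

Definition pointer_leaves (t : bt) : seq nat :=
  [seq p <- iota 0 (size (postorder t)) |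
     (~~ nth true (postorder t) p) && (p != leftmost_pos t)].

(** A relaxed binary tree is a spine [t] together with, for each leaf other
    than the left-most one (listed in postorder), the postorder position of
    its pointer target; the target must be an internal node or the left-most
    leaf and precede the leaf in postorder. *)
Definition relaxed_tree (n : nat) (rt : bt * seq nat) : Prop :=
  let (t, ptr) := rt in
  bt_size t = n /\
  size ptr = size (pointer_leaves t) /\
  (forall i, i < size ptr ->
     let l := nth 0 (pointer_leaves t) i in
     let q := nth 0 ptr i in
     q < l /\ (nth false (postorder t) q || (q == leftmost_pos t))).

(* Main.v *)
From HB Require Import structures.
Require Import Defs.
From mathcomp Require Import all_boot zify.
Set Implicit Arguments.
Unset Strict Implicit.
Unset Printing Implicit Defensive.


Section Gen.
Variable T : Type.
Implicit Types (P : pred T) (s : seq T).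

Fixpoint pos (P : pred T) (s : seq T) : seq nat :=
  match s with
  | [::] => [::]
  | x :: s' => if P x then 0 :: map S (pos P s') else map S (pos P s')
  end.

Lemma size_pos P s : size (pos P s) = count P s.
Proof. elim: s => //= x s IH; case: (P x) => /=; rewrite size_map IH //. Qed.

Lemma pos_iota P x0 s :
  pos P s = [seq p <- iota 0 (size s) | P (nth x0 s p)].
Proof.
elim: s => //= x s IH.
rewrite -(addn0 1) iotaDl filter_map /= IH; case: (P x) => //=.
Qed.

Lemma mem_pos P x0 s j : (j \in pos P s) = (j < size s) && P (nth x0 s j).
Proof.
rewrite (pos_iota P x0) mem_filter mem_iota /= andbC //.
Qed.

Lemma uniq_pos P s : uniq (pos P s).
Proof.
elim: s => //= x s IH.
have U : uniq (map S (pos P s)) by rewrite map_inj_uniq // => a b [].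
case: (P x) => //=; rewrite U andbT; apply/mapP; case=> //.
Qed.

Lemma count_take_mono P s a b : a <= b -> count P (take a s) <= count P (take b s).
Proof.
move=> ab; rewrite -(subnKC ab) takeD count_cat; apply: leq_addr.
Qed.

Lemma count_take_le P s b : count P (take b s) <= count P s.
Proof. by rewrite -{2}(cat_take_drop b s) count_cat leq_addr. Qed.

Lemma count_take_lt P x0 s j : j < size s -> P (nth x0 s j) ->
  count P (take j s) < count P s.
Proof.
move=> js Pj; apply: leq_trans (count_take_le P s j.+1).
by rewrite (take_nth x0 js) -cats1 count_cat /= Pj addn1.
Qed.

Lemma nth_pos_count P x0 s j : j < size s -> P (nth x0 s j) ->
  nth 0 (pos P s) (count P (take j s)) = j.
Proof.
elim: s j => //= x s IH [|j] /=.
  by move=> _ ->.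
move=> js Pj; have lt := count_take_lt js Pj.
case: (P x) => /=; rewrite (nth_map 0) ?IH ?size_pos //.
Qed.

Lemma pos_nth_props P x0 s k : k < count P s ->
  let j := nth 0 (pos P s) k in
  [/\ j < size s, P (nth x0 s j) & count P (take j s) = k].
Proof.
move=> ks /=; set j := nth 0 (pos P s) k.
have jin : j \in pos P s by rewrite mem_nth ?size_pos.
move: (jin); rewrite (mem_pos P x0) => /andP[js Pj]; split=> //.
apply/eqP; rewrite -(nth_uniq 0 _ _ (uniq_pos P s)) ?size_pos //.
  by rewrite (nth_pos_count js Pj).
exact: count_take_lt Pj.
Qed.

Lemma nth_pos_lt P (x0 : T) s k l : k < count P (take l s) -> nth 0 (pos P s) k < l.
Proof.
move=> kl; have ks : k < count P s by apply: leq_trans kl (count_take_le _ _ _).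
have [_ _ c] := pos_nth_props x0 ks.
rewrite ltnNge; apply/negP => lj.
by have := count_take_mono P s lj; rewrite c leqNgt kl.
Qed.

Lemma index_pos P x0 s p : p < size s -> P (nth x0 s p) ->
  index p (pos P s) = count P (take p s).
Proof.
move=> ps Pp; rewrite -{1}(nth_pos_count ps Pp) index_uniq ?uniq_pos ?size_pos //.
exact: count_take_lt Pp.
Qed.
End Gen.

Fixpoint run (stk : seq bt) (w : seq bool) : option bt :=
  match w with
  | [::] => if stk is [:: t] then Some t else None
  | false :: w' => run (Leaf :: stk) w'
  | true :: w' => if stk is r :: l :: stk' then run (Node l r :: stk') w' else None
  end.

Lemma run_post t stk w : run stk (postorder t ++ w) = run (t :: stk) w.
Proof.
elim: t stk w => //= l IHl r IHr stk w.
by rewrite -catA IHl -catA IHr.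
Qed.

Lemma run_post0 t : run [::] (postorder t) = Some t.
Proof. by rewrite -[postorder t]cats0 run_post. Qed.

Lemma post_head t : postorder t = false :: behead (postorder t).
Proof. elim: t => //= l IHl r _; rewrite IHl //. Qed.

Lemma leftmost0 t : leftmost_pos t = 0.
Proof. by elim: t. Qed.

Lemma count_post t : count id (postorder t) = bt_size t /\
                     count negb (postorder t) = (bt_size t).+1.
Proof.
elim: t => //= l [IHl1 IHl2] r [IHr1 IHr2].
rewrite !count_cat /= IHl1 IHl2 IHr1 IHr2; lia.
Qed.

Lemma post_prefix t i : 0 < i ->
  count id (take i (postorder t)) < count negb (take i (postorder t)).
Proof.
elim: t i => [|l IHl r IHr] i i0.
  by case: i i0.
rewrite /= take_cat.
case: ifP => il; first exact: IHl.
rewrite take_cat; case: ifP => ir.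
  have [a1 a2] := count_post l.
  rewrite !count_cat a1 a2.
  case E: (i - size (postorder l)) => [|k].
    by rewrite take0 /=; lia.
  have := IHr k.+1 isT; lia.
have [a1 a2] := count_post l; have [b1 b2] := count_post r.
rewrite !count_cat a1 a2 b1 b2.
case: (i - size (postorder l) - size (postorder r)) => [|k] /=; lia.
Qed.

Lemma run_ok w stk : 0 < size stk ->
  (forall i, i <= size w -> count id (take i w) < size stk + count negb (take i w)) ->
  count id w + 1 = size stk + count negb w ->
  exists t, run stk w = Some t /\
            postorder t = flatten (map postorder (rev stk)) ++ w.
Proof.
elim: w stk => [|b w IH] stk s0 pre tot.
  case: stk s0 pre tot => [|t [|t' stk]] //= _ _ tot.
  by exists t; rewrite cats0 /= cats0.
case: b pre tot => pre tot /=.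
  have := pre 1 isT; rewrite /= take0 /=.
  case: stk s0 pre tot => [|r [|l stk]] //= _ pre tot _.
  have h1 : forall i, i <= size w -> count id (take i w) < size (Node l r :: stk) + count negb (take i w).
    move=> i iw; have := pre i.+1 iw; rewrite /=; lia.
  have h2 : count id w + 1 = size (Node l r :: stk) + count negb w by move: tot => /=; lia.
  have [t [rt pt]] := IH (Node l r :: stk) isT h1 h2.
  exists t; split=> //; rewrite pt !rev_cons !map_rcons !flatten_rcons /=.
  by rewrite -!catA.
have h1 : forall i, i <= size w -> count id (take i w) < size (Leaf :: stk) + count negb (take i w).
  move=> i iw; have := pre i.+1 iw; rewrite /=; lia.
have h2 : count id w + 1 = size (Leaf :: stk) + count negb w by move: tot => /=; lia.
have [t [rt pt]] := IH (Leaf :: stk) isT h1 h2.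
exists t; split=> //; rewrite pt rev_cons map_rcons flatten_rcons /=.
by rewrite -catA.
Qed.

Definition isH (st : step) : bool := if st is Some _ then true else false.
Definition isV (st : step) : bool := if st is None then true else false.

Lemma hd_pathE n m s : hd_path n m s <->
  [/\ (forall i, i <= size s -> count isV (take i s) <= count isH (take i s)),
      (forall i d, i < size s -> nth None s i = Some d -> 1 <= d <= (count isV (take i s)).+1),
      count isH s = n & count isV s = m].
Proof.
rewrite /hd_path /xcoord /ycoord take_size.
split; [case=> a [b [c e]]; split=> // i d il nd; case: (b i d il nd) => -> -> //
       | case=> a b c e; split=> //; split=> //].
move=> i d il nd; have /andP[] := b i d il nd => //.
Qed.

Lemma take_rcons_le (T : Type) (q : seq T) x i : i <= size q -> take i (rcons q x) = take i q.
Proof. by move=> iq; rewrite -cats1 take_cat; case: ltngtP iq => // ->; rewrite subnn take0 cats0 take_size. Qed.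

Lemma hd_nil n m : hd_path n m [::] <-> n = 0 /\ m = 0.
Proof.
rewrite hd_pathE /=; split; first by case=> _ _ <- <-.
by case=> -> ->; split=> // [] [].
Qed.

Lemma hd_rcons n m q st : hd_path n m (rcons q st) <->
  m <= n /\ match st with
            | None => 0 < m /\ hd_path n m.-1 q
            | Some d => [/\ 0 < n, 1 <= d <= m.+1 & hd_path n.-1 m q] end.
Proof.
rewrite !hd_pathE size_rcons; split.
  case=> a b c e.
  have a' : forall i, i <= size q -> count isV (take i q) <= count isH (take i q).
    by move=> i iq; rewrite -!(take_rcons_le st iq); apply: a; apply: leqW.
  have b' : forall i d, i < size q -> nth None q i = Some d -> 1 <= d <= (count isV (take i q)).+1.
    move=> i d iq nd; rewrite -(take_rcons_le st (ltnW iq)); apply: b; first exact: leqW.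
    by rewrite nth_rcons iq.
  have := a _ (leqnn _); rewrite -(size_rcons q st) take_size c e => mn.
  split=> //.
  clear a; move: c e; rewrite -!cats1 !count_cat.
  case: st b => [d|] b /= c e.
    have := b (size q) d (leqnn _); rewrite nth_rcons ltnn eqxx take_rcons_le // => /(_ erefl) dd.
    split; [lia | by rewrite -e !addn0 -(take_size q) | apply/hd_pathE; split => //; lia].
  by split; [lia | apply/hd_pathE; split=> //; lia].
case=> mn H.
case: st H => [d [n0 dd /hd_pathE[a b c e]]|[m0 /hd_pathE[a b c e]]];
 have key : forall i, i <= size q -> take i (rcons q _) = take i q by move=> i; apply: take_rcons_le.
- split.
  + move=> i; rewrite leq_eqVlt => /orP[/eqP ->|]; last by move=> iq; rewrite key //; apply: a.
    by rewrite -(size_rcons q (Some d)) take_size -!cats1 !count_cat /= c e; lia.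
  + move=> i d'; rewrite ltnS leq_eqVlt => /orP[/eqP ->|iq].
      by rewrite nth_rcons ltnn eqxx key // take_size e => -[<-].
    by rewrite nth_rcons iq key ?(ltnW iq) //; apply: b.
  + by rewrite -!cats1 !count_cat /= c; lia.
  + by rewrite -!cats1 !count_cat /= e; lia.
- split.
  + move=> i; rewrite leq_eqVlt => /orP[/eqP ->|]; last by move=> iq; rewrite key //; apply: a.
    by rewrite -(size_rcons q None) take_size -!cats1 !count_cat /= c e; lia.
  + move=> i d'; rewrite ltnS leq_eqVlt => /orP[/eqP ->|iq].
      by rewrite nth_rcons ltnn eqxx.
    by rewrite nth_rcons iq key ?(ltnW iq) //; apply: b.
  + by rewrite -!cats1 !count_cat /= c; lia.
  + by rewrite -!cats1 !count_cat /= e; lia.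
Qed.

Fixpoint Ef k n m : seq (seq step) :=
  match k with
  | 0 => [::]
  | k'.+1 =>
    if n < m then [::] else
    (if (n == 0) && (m == 0) then [:: [::]] else [::]) ++
    (if m is m'.+1 then map (fun p => rcons p None) (Ef k' n m') else [::]) ++
    (if n is n'.+1 then [seq rcons p (Some d) | p <- Ef k' n' m, d <- iota 1 m.+1] else [::])
  end.

Definition E n m := Ef (n + m).+1 n m.

Lemma E_eq n m : E n m =
    if n < m then [::] else
    (if (n == 0) && (m == 0) then [:: [::]] else [::]) ++
    (if m is m'.+1 then map (fun p => rcons p None) (E n m') else [::]) ++
    (if n is n'.+1 then [seq rcons p (Some d) | p <- E n' m, d <- iota 1 m.+1] else [::]).
Proof.
rewrite /E /=; case: m => [|m]; case: n => [|n] //=; rewrite ?addnS ?addSn //.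
Qed.

Lemma nil_E n m : ([::] \in E n m) = (n == 0) && (m == 0).
Proof.
rewrite E_eq; case: ltnP => nm.
  by case: n m nm => [|n] [|m].
rewrite !mem_cat; case: (_ && _); first by rewrite inE eqxx.
rewrite in_nil orFb.
have -> : ([::] \in (if m is m'.+1 then map (fun p => rcons p None) (E n m') else [::])) = false.
  case: m {nm} => [|m] //; apply/negP => /mapP [p _ /esym/eqP]; by rewrite -size_eq0 size_rcons.
case: n nm => [|n] nm; first by [].
apply/negP => /allpairsP [[p d] [_ _ /esym/eqP]]; by rewrite -size_eq0 size_rcons.
Qed.

Lemma rcons_E n m q st : (rcons q st \in E n m) =
  (m <= n) && (match st with
               | None => (0 < m) && (q \in E n m.-1)
               | Some d => [&& 0 < n, 1 <= d <= m.+1 & q \in E n.-1 m] end).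
Proof.
rewrite E_eq; case: ltnP => nm; first by [].
rewrite /= !mem_cat.
have -> : (rcons q st \in (if (n == 0) && (m == 0) then [:: [::]] else [::])) = false.
  by case: (_ && _); rewrite ?inE // -size_eq0 size_rcons.
rewrite /=.
have A : (rcons q st \in (if m is m'.+1 then map (fun p => rcons p None) (E n m') else [::]))
         = if st is None then (0 < m) && (q \in E n m.-1) else false.
  case: m nm => [|m] nm; first by case: st.
  rewrite /=; apply/mapP; case: ifP.
  - case: st => // qin; by exists q.
  - move=> F [p pin /rcons_inj [e1 e2]]; subst; by move: F; rewrite pin.
have B : (rcons q st \in (if n is n'.+1 then [seq rcons p (Some d) | p <- E n' m, d <- iota 1 m.+1] else [::]))
         = if st is Some d then [&& 0 < n, 1 <= d <= m.+1 & q \in E n.-1 m] else false.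
  clear A; case: n nm => [|n] nm; first by case: st.
  apply/allpairsP; case: ifP.
  - case: st => // d /and3P[_ dd qin]; exists (q, d); split=> //.
    by rewrite mem_iota add1n.
  - move=> F [[p d] [pin din /= /rcons_inj [e1 e2]]]; subst.
    move: F din => /= F din; move: F; rewrite pin andbT /= (_ : (0 < d <= m.+1) = true) //.
    by move: din; rewrite -[1 :: iota 2 m]/(iota 1 m.+1) mem_iota add1n.
rewrite A B; case: st {A B} => [d|] //=; rewrite orbF //.
Qed.

Lemma mem_E p n m : p \in E n m <-> hd_path n m p.
Proof.
elim/last_ind: p n m => [|q st IH] n m.
  rewrite nil_E hd_nil; split; [by case/andP => /eqP -> /eqP -> | by case=> -> ->].
rewrite rcons_E hd_rcons; case: st => [d|]; split.
- by case/and4P => mn n0 dd /IH qin.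
- by case=> mn [n0 dd /IH qin]; rewrite mn n0 dd qin.
- by case/and3P => mn m0 /IH qin.
- by case=> mn [m0 /IH qin]; rewrite mn m0 qin.
Qed.

Lemma Ef_S k n m : Ef k.+1 n m =
    if n < m then [::] else
    (if (n == 0) && (m == 0) then [:: [::]] else [::]) ++
    (if m is m'.+1 then map (fun p => rcons p None) (Ef k n m') else [::]) ++
    (if n is n'.+1 then [seq rcons p (Some d) | p <- Ef k n' m, d <- iota 1 m.+1] else [::]).
Proof. by []. Qed.

Lemma uniq3 (T : eqType) (f : T -> nat) (a b c : seq T) :
  uniq a -> uniq b -> uniq c -> {in a, forall x, f x = 0} ->
  {in b, forall x, f x = 1} -> {in c, forall x, f x = 2} -> uniq (a ++ b ++ c).
Proof.
move=> ua ub uc fa fb fc; rewrite !cat_uniq ua ub uc /= andbT.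
apply/andP; split.
  apply/hasPn => x; rewrite mem_cat => /orP[/fb|/fc] e; apply/negP => /fa; by rewrite e.
apply/hasPn => x /fc e; apply/negP => /fb; by rewrite e.
Qed.

Definition tag (x : seq step) : nat :=
  if x is [::] then 0 else if last None x is Some _ then 2 else 1.

Lemma uniq_E n m : uniq (E n m).
Proof.
rewrite /E; move: (n + m).+1 => k; elim: k n m => [|k IH] n m; first by [].
rewrite Ef_S; case: ltnP => // nm.
apply: (uniq3 (f := tag)).
- by case: (_ && _).
- case: m nm => [|m] nm; first by [].
  by rewrite map_inj_uniq ?IH // => a b; exact: rcons_injl.
- case: n nm => [|n] nm; first by [].
  apply: allpairs_uniq; rewrite ?IH ?iota_uniq //.
  by move=> [a b] [c d] _ _ /= /rcons_inj [-> ->].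
- by case: (_ && _) => // x; rewrite inE => /eqP ->.
- case: m nm => [|m] nm x; first by [].
  by case/mapP => p _ ->; rewrite /tag last_rcons; case: p.
- case: n nm => [|n] nm x; first by [].
  by case/allpairsP => -[p d] [_ _ ->]; rewrite /tag last_rcons; case: p.
Qed.

Definition r n m := size (E n m).

Lemma r_lt n m : n < m -> r n m = 0.
Proof. by move=> nm; rewrite /r E_eq nm. Qed.

Lemma r_0 n : r n 0 = 1.
Proof.
elim: n => [|n IH]; first by rewrite /r E_eq.
by rewrite /r E_eq /= flatten_map1 size_map.
Qed.

Lemma r_rec n m : 1 <= n -> 1 <= m -> m <= n ->
  r n m = r n (m - 1) + (m + 1) * r (n - 1) m.
Proof.
case: n => [|n] // _; case: m => [|m] // _ mn.
rewrite /r.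
have -> : E n.+1 m.+1 = if n.+1 < m.+1 then [::] else map (fun p => rcons p None) (E n.+1 m) ++
    [seq rcons p (Some d) | p <- E n m.+1, d <- iota 1 m.+2] by rewrite E_eq.
rewrite ltnNge mn size_cat size_map size_allpairs size_iota !subn1.
by rewrite mulnC addn1.
Qed.

Lemma In_mem (T : eqType) (x : T) s : List.In x s <-> x \in s.
Proof.
elim: s => [|y s IH] /=; first by split.
rewrite inE IH; split; [case=> [->|->]; rewrite ?eqxx ?orbT // | case/orP=> [/eqP ->|]; auto].
Qed.

Lemma is_count_seq (T : eqType) (P : T -> Prop) (s : seq T) :
  uniq s -> (forall x, x \in s <-> P x) -> is_count P (size s).
Proof.
move=> us H; exists s; split; last split=> //.
  elim: s us {H} => [|x s IH] /=; first by constructor.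
  case/andP => xs us; constructor; last exact: IH.
  by move/In_mem; apply/negP.
by move=> x; rewrite In_mem H.
Qed.

Lemma count_paths n m : is_count (hd_path n m) (r n m).
Proof. apply: is_count_seq; [exact: uniq_E | move=> x; exact: mem_E]. Qed.

Fixpoint bt_eqb (a b : bt) : bool :=
  match a, b with
  | Leaf, Leaf => true
  | Node a1 a2, Node b1 b2 => bt_eqb a1 b1 && bt_eqb a2 b2
  | _, _ => false
  end.

Lemma bt_eqP : Equality.axiom bt_eqb.
Proof.
elim=> [|a1 IH1 a2 IH2] [|b1 b2] /=; try by constructor.
case: (IH1 b1) => [->|ne]; last by constructor => -[].
case: (IH2 b2) => [->|ne]; last by constructor => -[].
by constructor.
Qed.

HB.instance Definition _ := hasDecEq.Build bt bt_eqP.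

Lemma pl_eq t u : postorder t = false :: u -> pointer_leaves t = map S (pos negb u).
Proof.
move=> pt; rewrite /pointer_leaves leftmost0 pt /=.
rewrite -(addn0 1) iotaDl filter_map (pos_iota negb true u).
rewrite (eq_filter (a2 := fun i => ~~ nth true u i)); last by move=> x; rewrite /= andbT.
apply: eq_map => x; by rewrite add1n.
Qed.

Lemma cntV s : count id (map isV s) = count isV s.
Proof. by rewrite count_map. Qed.
Lemma cntH s : count negb (map isV s) = count isH s.
Proof. by rewrite count_map; apply: eq_count => -[]. Qed.
Lemma cntVt s i : count id (take i (map isV s)) = count isV (take i s).
Proof. by rewrite -map_take cntV. Qed.
Lemma cntHt s i : count negb (take i (map isV s)) = count isH (take i s).
Proof. by rewrite -map_take cntH. Qed.

Lemma pmap_nth (y : seq step) j d : nth None y j = Some d ->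
  nth 0 (pmap id y) (count isH (take j y)) = d.
Proof.
elim: y j => [|x y IH] [|j] //=.
  by move=> ->.
by case: x => [a|] /= e; rewrite ?add1n /= IH.
Qed.

Definition tree_of (y : seq step) := odflt Leaf (run [::] (false :: map isV y)).

Definition tgt (u : seq bool) (d : nat) : nat :=
  if d is d'.+2 then (nth 0 (pos id u) d').+1 else 0.

Definition gmap (y : seq step) : bt * seq nat :=
  (tree_of y, map (tgt (map isV y)) (pmap id y)).

Lemma tree_of_post n y : hd_path n n y -> postorder (tree_of y) = false :: map isV y.
Proof.
case/hd_pathE => a b c e.
have h1 : forall i, i <= size (map isV y) -> count id (take i (map isV y)) < size [:: Leaf] + count negb (take i (map isV y)).
  move=> i; rewrite size_map => iy; rewrite cntVt cntHt /= add1n ltnS; exact: a.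
have h2 : count id (map isV y) + 1 = size [:: Leaf] + count negb (map isV y).
  by rewrite cntV cntH c e addn1 add1n.
have [t [rt pt]] := @run_ok (map isV y) [:: Leaf] isT h1 h2.
by rewrite /tree_of /= rt pt.
Qed.

Lemma g_valid n y : hd_path n n y -> relaxed_tree n (gmap y).
Proof.
move=> hp; have pt := tree_of_post hp.
case/hd_pathE: hp => a b c e.
set u := map isV y in pt *.
rewrite /relaxed_tree /gmap -/u.
have cnt := count_post (tree_of y); rewrite pt /= in cnt.
case: cnt => c1 c2.
have pl := pl_eq pt.
have szp : size (pmap id y) = count negb u.
  by rewrite size_pmap cntH; apply: eq_count => -[].
split; first by rewrite -c1 cntV.
split; first by rewrite size_map pl size_map size_pos szp.
move=> i; rewrite size_map szp => iu /=.
rewrite pl (nth_map 0 0 S) ?size_pos // (nth_map 0 0 (tgt u)) ?szp //.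
have [js Pj ci] := pos_nth_props true iu.
set j := nth 0 (pos negb u) i in js Pj ci *.
have yj : j < size y by rewrite -(size_map isV).
move: Pj; rewrite /u (nth_map None) //.
case E: (nth None y j) => [d|] // _.
have := pmap_nth E; rewrite -cntHt -/u ci => ->.
have := b j d yj E; rewrite -cntVt -/u => /andP[d1 dle].
rewrite pt leftmost0.
case: d d1 dle {E} => [|[|d']] // _ dle /=.
have dl : d' < count id (take j u) by [].
split; first by rewrite ltnS; apply: (@nth_pos_lt _ id false u d' j dl).
have [_ P _] := pos_nth_props false (leq_trans dl (count_take_le _ _ _)).
by rewrite P.
Qed.

Lemma map_inj_on (f : nat -> nat) (P : nat -> Prop) (a b : seq nat) :
  (forall x, x \in a -> P x) -> (forall x, x \in b -> P x) ->
  (forall x y, P x -> P y -> f x = f y -> x = y) -> map f a = map f b -> a = b.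
Proof.
move=> Pa Pb inj; elim: a b Pa Pb => [|x a IH] [|y b] //= Pa Pb [e es].
rewrite (inj x y) ?(Pa x) ?(Pb y) ?mem_head //.
congr (_ :: _); apply: IH es => z zin.
  by apply: Pa; rewrite inE zin orbT.
by apply: Pb; rewrite inE zin orbT.
  by apply: Pa; rewrite mem_head.
by apply: Pb; rewrite mem_head.
Qed.

Lemma steps_eq (y1 y2 : seq step) : map isV y1 = map isV y2 -> pmap id y1 = pmap id y2 -> y1 = y2.
Proof.
elim: y1 y2 => [|x1 y1 IH] [|x2 y2] //= [e1 e2].
case: x1 e1 => [a|]; case: x2 => [b|] //= _.
  by move=> [-> /(IH _ e2) ->].
by move/(IH _ e2) => ->.
Qed.

Lemma dec_range n y d : hd_path n n y -> d \in pmap id y -> 1 <= d <= (count isV y).+1.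
Proof.
case/hd_pathE => a b c e; rewrite mem_pmap map_id => din.
have := b (index (Some d) y) d; rewrite index_mem nth_index // => /(_ din erefl) /andP[-> le].
by rewrite (leq_trans le) // ltnS count_take_le.
Qed.

Lemma g_inj n y1 y2 : hd_path n n y1 -> hd_path n n y2 -> gmap y1 = gmap y2 -> y1 = y2.
Proof.
move=> h1 h2 [et ep].
have eu : map isV y1 = map isV y2.
  by have := tree_of_post h1; rewrite et (tree_of_post h2) => -[].
apply: steps_eq => //.
move: ep; rewrite -eu => ep.
have K : count isV y2 = count isV y1 by rewrite -!cntV eu.
apply: (map_inj_on (P := fun d => 1 <= d <= (count isV y1).+1)) ep.
- by move=> x; apply: dec_range h1.
- by move=> x xin; rewrite -K; apply: dec_range h2 xin.
move=> [|[|x]] [|[|z]] // /andP[_ xl] /andP[_ zl] [] /eqP.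
have xl' : x < count isV y1 by lia.
have zl' : z < count isV y1 by lia.
rewrite nth_uniq ?uniq_pos ?size_pos ?cntV //.
by move/eqP => ->.
Qed.

Fixpoint rebuild (u : seq bool) (ds : seq nat) : seq step :=
  match u with
  | [::] => [::]
  | true :: u' => None :: rebuild u' ds
  | false :: u' => Some (head 0 ds) :: rebuild u' (behead ds)
  end.

Lemma rebuild_V u ds : map isV (rebuild u ds) = u.
Proof. by elim: u ds => [|[] u IH] ds //=; rewrite IH. Qed.

Lemma rebuild_pmap u ds : size ds = count negb u -> pmap id (rebuild u ds) = ds.
Proof.
elim: u ds => [|[] u IH] ds /=; first by case: ds.
  by apply: IH.
by case: ds => [|d ds] //= [] /IH ->.
Qed.

Lemma rebuild_nth u ds j : j < size u -> nth None (rebuild u ds) j =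
  if nth true u j then None else Some (nth 0 ds (count negb (take j u))).
Proof.
elim: u ds j => [|[] u IH] ds [|j] //= js; rewrite ?IH //.
by case: ds => [|d ds] //=; rewrite ?add1n ?nth_nil.
Qed.

Definition psi (u : seq bool) (q : nat) : nat :=
  if q is p.+1 then (index p (pos id u)).+2 else 1.

Lemma g_surj n x : relaxed_tree n x -> exists y, hd_path n n y /\ gmap y = x.
Proof.
case: x => t ptr [sz [szp rel]].
set u := behead (postorder t).
have pt : postorder t = false :: u := post_head t.
have pl := pl_eq pt.
rewrite pl size_map size_pos in szp.
have R : forall i, i < count negb u -> nth 0 ptr i < (nth 0 (pos negb u) i).+1 /\
          (nth false (false :: u) (nth 0 ptr i) || (nth 0 ptr i == 0)).
  move=> i iu; have := rel i; rewrite szp => /(_ iu) /=.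
  by rewrite pl pt leftmost0 (nth_map 0 0 S) ?size_pos.
set ds := map (psi u) ptr.
exists (rebuild u ds).
have [c1 c2] := count_post t; rewrite pt /= in c1 c2.
have vu := rebuild_V u ds.
have pm : pmap id (rebuild u ds) = ds by apply: rebuild_pmap; rewrite size_map szp.
split.
- apply/hd_pathE; split.
  + move=> i il; rewrite -cntVt -cntHt vu.
    have := @post_prefix t i.+1 isT; rewrite pt /=; lia.
  + move=> j d; rewrite -(size_map isV) vu => jl; rewrite rebuild_nth //.
    case Ej: (nth true u j) => //; case => <-.
    rewrite -cntVt vu.
    have Pj : negb (nth true u j) by rewrite Ej.
    have ilt := count_take_lt jl Pj.
    rewrite /ds (nth_map 0 0) ?szp //.
    have [lt tg] := R _ ilt; rewrite (nth_pos_count jl Pj) in lt.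
    move: lt tg; case: (nth 0 ptr _) => [|p] //= lt tg.
    rewrite orbF in tg.
    have pu : p < size u by lia.
    rewrite (index_pos pu tg).
    have e1 : count id (take p.+1 u) = (count id (take p u)).+1.
      by rewrite (take_nth false pu) -cats1 count_cat /= tg addn1.
    have := @count_take_mono _ id u p.+1 j lt.
    lia.
  + by rewrite -cntH vu; lia.
  + by rewrite -cntV vu; lia.
- rewrite /gmap /tree_of vu pm -pt run_post0 /=; congr pair.
  rewrite /ds -map_comp; apply: map_id_in => q qin /=.
  have iu : index q ptr < count negb u by rewrite -szp index_mem.
  have [lt tg] := R _ iu; rewrite nth_index // in lt tg.
  have [pl' _ _] := pos_nth_props true iu.
  have qs : q <= size u by apply: leq_trans (ltnW pl'); rewrite -ltnS.
  clear pl' iu.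
  case: q qin lt tg qs => [|p] // qin lt tg qs.
  rewrite /= orbF in tg.
  have pu : p < size u by [].
  have pin : p \in pos id u by rewrite (mem_pos id false) pu tg.
  by rewrite /psi /tgt nth_index.
Qed.

Lemma count_relaxed n : is_count (relaxed_tree n) (r n n).
Proof.
rewrite /r -(size_map gmap).
apply: is_count_seq.
  rewrite map_inj_in_uniq ?uniq_E // => y1 y2 /mem_E h1 /mem_E h2.
  exact: g_inj h1 h2.
move=> x; split.
  by case/mapP => y /mem_E hy ->; exact: g_valid hy.
move/g_surj => [y [hy <-]]; apply: map_f; exact/mem_E.
Qed.

Theorem proposition2p6 :
  exists r : nat -> nat -> nat,
    (forall n m : nat, is_count (hd_path n m) (r n m)) /\
    (forall n m : nat, 1 <= n -> 1 <= m -> m <= n ->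
        r n m = r n (m - 1) + (m + 1) * r (n - 1) m) /\
    (forall n m : nat, n < m -> r n m = 0) /\
    (forall n : nat, r n 0 = 1) /\
    (forall n : nat, is_count (relaxed_tree n) (r n n)).
Proof.
exists r; split; first exact: count_paths.
split; first exact: r_rec.
split; first exact: r_lt.
split; first exact: r_0.
exact: count_relaxed.
Qed.
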